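(* Let $\pi:P\to M$ be a principal fibre bundle with group $G=P^{-1}P$, in the setting described in the context, and let $\nabla$ be a connection in the groupoid $PP^{-1}$ with connection form $\omega$. Let $R=R_\nabla$ be its curvature and $\hat R$ the $G$-valued 2-form on $P$ corresponding to $R$. Then $\hat R=d\omega$ as $G$-valued 2-forms on $P$, i.e. for every infinitesimal 2-simplex $(x,y,z)$ in $P$, $$R(\pi x,\pi y,\pi z)\cdot x = x\cdot\omega(x,y)\omega(y,z)\omega(z,x).$$ In particular, $d\omega$ is horizontal and equivariant.
   Context: Setting: $\Phi$ is a groupoid whose object set contains a set $M$ and an object $*\notin M$; $P$ is the set of arrows of $\Phi$ with domain $*$ and codomain in $M$; $\pi:P\to M$ the codomain map; $G=P^{-1}P:=\Phi( *,* )$ acts on $P$ from the right by precomposition, freely and transitively on fibres; $x^{-1}z\in G$ for $x,z$ in one fibre is computed in $\Phi$. $PP^{-1}$ is the full subgroupoid of $\Phi$ on $M$, acting on $P$ from the left by postcomposition; composition is right to left. $M$ and $P$ carry reflexive symmetric neighbour relations $\sim$; an infinitesimal $k$-simplex is a $(k+1)$-tuple of mutual neighbours; $\pi$ preserves $\sim$; every infinitesimal $k$-simplex in $M$ lifts to one in $P$ starting at any prescribed point over its first vertex; the right action of each $g\in G$ preserves $\sim$. A connection in $PP^{-1}$ assigns to each $a\sim b$ in $M$ an arrow $\nabla(a,b):b\to a$ of $PP^{-1}$, with $\nabla(a,a)=\mathrm{id}$, $\nabla(b,a)=\nabla(a,b)^{-1}$. Its connection form is $\omega(u,v):=u^{-1}(\nabla(\pi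 u,\pi v)\cdot v)\in G$ for $u\sim v$. Its curvature is the 2-form $R(a_0,a_1,a_2)=\nabla(a_0,a_1)\nabla(a_1,a_2)\nabla(a_2,a_0)\in PP^{-1}(a_0,a_0)$ on infinitesimal 2-simplices of $M$ (a 2-form with values in the gauge group bundle, whose fibre over $a$ is $PP^{-1}(a,a)$). For a gauge-valued 2-form $\alpha$ on $M$, $\hat\alpha$ is the $G$-valued 2-form on $P$ with $\hat\alpha(u_0,u_1,u_2)=u_0^{-1}(\alpha(\pi u_0,\pi u_1,\pi u_2)\cdot u_0)$. For a $G$-valued 1-form $\omega$, $d\omega(x_0,x_1,x_2)=\omega(x_0,x_1)\omega(x_1,x_2)\omega(x_2,x_0)$. A $G$-valued $k$-form $\theta$ on $P$ is horizontal if $\theta(u_0,u_1,\dots,u_k)=\theta(u_0,u_1g_1,\dots,u_kg_k)$ whenever $(u_0,u_1g_1,\dots,u_kg_k)$ is still an infinitesimal simplex, and equivariant if $\theta(u_0g,\dots,u_kg)=g^{-1}\theta(u_0,\dots,u_k)g$ for all $g\in G$. *)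

(* Defs.v *)
From Stdlib Require Import Arith.

Set Implicit Arguments.

(* A groupoid: objects, hom-types, identities, composition (right to left:
   gcomp g f = "g f" = first f then g), inverses, with the groupoid laws. *)
Record groupoid := Groupoid {
  Ob : Type;
  Hom : Ob -> Ob -> Type;
  gid : forall a, Hom a a;
  gcomp : forall a b c, Hom b c -> Hom a b -> Hom a c;
  ginv : forall a b, Hom a b -> Hom b a;
  gassoc : forall a b c d (h : Hom c d) (g : Hom b c) (f : Hom a b),
      gcomp h (gcomp g f) = gcomp (gcomp h g) f;
  gid_l : forall a b (f : Hom a b), gcomp (gid b) f = f;
  gid_r : forall a b (f : Hom a b), gcomp f (gid a) = f;
  ginv_l : forall a b (f : Hom a b), gcomp (ginv f) f = gid a;
  ginv_r : forall a b (f : Hom a b), gcomp f (ginv f) = gid b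
}.

Arguments gid {g0} a : rename.
Arguments gcomp {g0 a b c} _ _ : rename.
Arguments ginv {g0 a b} _ : rename.

Section Bundle.
Variable Phi : groupoid.
Variable M : Type.
Variable iota : M -> Ob Phi.
Variable star : Ob Phi.

Definition Pb := { m : M & Hom Phi star (iota m) }.
Definition Gr := Hom Phi star star.
Definition piP (u : Pb) : M := projT1 u.
Definition arr (u : Pb) : Hom Phi star (iota (piP u)) := projT2 u.
Definition actR (u : Pb) (g : Gr) : Pb := existT _ (projT1 u) (gcomp (projT2 u) g).

Variable nbM : M -> M -> Prop.
Variable nbP : Pb -> Pb -> Prop.

Definition simplexM (k : nat) (a : nat -> M) : Prop :=
  forall i j, i <= k -> j <= k -> nbM (a i) (a j).
Definition simplexP (k : nat) (u : nat -> Pb) : Prop :=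
  forall i j, i <= k -> j <= k -> nbP (u i) (u j).

Definition simplex2M (a0 a1 a2 : M) : Prop :=
  nbM a0 a1 /\ nbM a1 a2 /\ nbM a2 a0.
Definition simplex2P (u0 u1 u2 : Pb) : Prop :=
  nbP u0 u1 /\ nbP u1 u2 /\ nbP u2 u0.

Definition bundle_axioms : Prop :=
  (forall a, nbM a a) /\ (forall a b, nbM a b -> nbM b a) /\
  (forall u, nbP u u) /\ (forall u v, nbP u v -> nbP v u) /\
  (forall u v, nbP u v -> nbM (piP u) (piP v)) /\
  (forall (k : nat) (a : nat -> M), simplexM k a ->
     forall u0 : Pb, piP u0 = a 0 ->
     exists u : nat -> Pb, simplexP k u /\ u 0 = u0 /\
        forall i, i <= k -> piP (u i) = a i) /\
  (forall (g : Gr) u v, nbP u v -> nbP (actR u g) (actR v g)).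

Definition preconnection := forall a b : M, nbM a b -> Hom Phi (iota b) (iota a).

Definition is_connection (nabla : preconnection) : Prop :=
  (forall a (h : nbM a a), nabla a a h = gid (iota a)) /\
  (forall a b (h : nbM a b) (h' : nbM b a), nabla b a h' = ginv (nabla a b h)).

Variable pi_nb : forall u v, nbP u v -> nbM (piP u) (piP v).

Definition conn_form (nabla : preconnection) (u v : Pb) (h : nbP u v) : Gr :=
  gcomp (ginv (arr u)) (gcomp (nabla (piP u) (piP v) (pi_nb h)) (arr v)).

Definition curvature (nabla : preconnection) (a0 a1 a2 : M)
    (s : simplex2M a0 a1 a2) : Hom Phi (iota a0) (iota a0) :=
  gcomp (nabla a0 a1 (proj1 s))
    (gcomp (nabla a1 a2 (proj1 (proj2 s))) (nabla a2 a0 (proj2 (proj2 s)))).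

Definition form2P := forall u0 u1 u2 : Pb, simplex2P u0 u1 u2 -> Gr.

Definition pi_simplex2 (u0 u1 u2 : Pb) (s : simplex2P u0 u1 u2) :
    simplex2M (piP u0) (piP u1) (piP u2) :=
  conj (pi_nb (proj1 s)) (conj (pi_nb (proj1 (proj2 s))) (pi_nb (proj2 (proj2 s)))).

Definition gauge_form2M :=
  forall a0 a1 a2 : M, simplex2M a0 a1 a2 -> Hom Phi (iota a0) (iota a0).

Definition hat (alpha : gauge_form2M) : form2P :=
  fun u0 u1 u2 s =>
    gcomp (ginv (arr u0)) (gcomp (alpha _ _ _ (pi_simplex2 s)) (arr u0)).

Definition dform1 (omega : forall u v : Pb, nbP u v -> Gr) : form2P :=
  fun u0 u1 u2 s =>
    gcomp (omega u0 u1 (proj1 s))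
      (gcomp (omega u1 u2 (proj1 (proj2 s))) (omega u2 u0 (proj2 (proj2 s)))).

Definition horizontal2 (theta : form2P) : Prop :=
  forall (u0 u1 u2 : Pb) (g1 g2 : Gr) (s : simplex2P u0 u1 u2)
         (s' : simplex2P u0 (actR u1 g1) (actR u2 g2)),
    theta u0 u1 u2 s = theta u0 (actR u1 g1) (actR u2 g2) s'.

Definition equivariant2 (theta : form2P) : Prop :=
  forall (u0 u1 u2 : Pb) (g : Gr) (s : simplex2P u0 u1 u2)
         (s' : simplex2P (actR u0 g) (actR u1 g) (actR u2 g)),
    theta (actR u0 g) (actR u1 g) (actR u2 g) s' =
    gcomp (ginv g) (gcomp (theta u0 u1 u2 s) g).

End Bundle.

(* Main.v *)
Require Import Defs.
From Stdlib Require Import ProofIrrelevance.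

Section L.
Variable G : groupoid.
Lemma canc a b c (f : Hom G a b) (k : Hom G c b) : gcomp f (gcomp (ginv f) k) = k.
Proof. rewrite gassoc, ginv_r, gid_l. reflexivity. Qed.
Lemma canc' a b c (f : Hom G a b) (k : Hom G c a) : gcomp (ginv f) (gcomp f k) = k.
Proof. rewrite gassoc, ginv_l, gid_l. reflexivity. Qed.
Lemma ginv_comp a b c (f : Hom G a b) (g : Hom G b c) :
  ginv (gcomp g f) = gcomp (ginv f) (ginv g).
Proof.
  assert (H : gcomp (gcomp g f) (gcomp (ginv f) (ginv g)) = gid c).
  { rewrite <- gassoc, canc, ginv_r. reflexivity. }
  transitivity (gcomp (ginv (gcomp g f)) (gcomp (gcomp g f) (gcomp (ginv f) (ginv g)))).
  - rewrite H, gid_r. reflexivity.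
  - apply canc'.
Qed.
End L.

Theorem theorem1
  (Phi : groupoid) (M : Type) (iota : M -> Ob Phi) (star : Ob Phi)
  (iota_inj : forall m m' : M, iota m = iota m' -> m = m')
  (star_notin : forall m : M, iota m <> star)
  (nbM : M -> M -> Prop) (nbP : Pb Phi iota star -> Pb Phi iota star -> Prop)
  (Hax : bundle_axioms nbM nbP)
  (pi_nb : forall u v, nbP u v -> nbM (piP u) (piP v))
  (nabla : preconnection Phi iota nbM) (Hnabla : is_connection nabla) :
  let omega := conn_form nbP pi_nb nabla in
  let R := curvature nabla in
  (* hat R = d omega as G-valued 2-forms on P *)
  (forall (x y z : Pb Phi iota star) (s : simplex2P nbP x y z),
     hat pi_nb R s = dform1 omega s) /\
  (* i.e. R(pi x, pi y, pi z) . x = x . omega(x,y) omega(y,z) omega(z,x) *)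
  (forall (x y z : Pb Phi iota star) (s : simplex2P nbP x y z),
     gcomp (R _ _ _ (pi_simplex2 nbM pi_nb s)) (arr x) =
     gcomp (arr x) (gcomp (omega x y (proj1 s))
                     (gcomp (omega y z (proj1 (proj2 s)))
                            (omega z x (proj2 (proj2 s)))))) /\
  (* in particular d omega is horizontal and equivariant *)
  horizontal2 (dform1 omega) /\ equivariant2 (dform1 omega).
Proof.
  intros omega R.
  assert (key : forall (x y z : Pb Phi iota star) (s : simplex2P nbP x y z),
     hat pi_nb R s = dform1 omega s).
  { intros x y z s. unfold hat, dform1, omega, R, conn_form, curvature, pi_simplex2; simpl.
    repeat rewrite <- gassoc. repeat rewrite canc. repeat (f_equal; try apply proof_irrelevance). }
  split; [exact key|]. split.
  { intros x y z s. change (gcomp (omega x y (proj1 s))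
                     (gcomp (omega y z (proj1 (proj2 s)))
                            (omega z x (proj2 (proj2 s))))) with (dform1 omega s).
    rewrite <- key. unfold hat. rewrite canc. reflexivity. }
  split.
  { intros u0 u1 u2 g1 g2 s s'. rewrite <- !key. unfold hat. simpl.
    f_equal. f_equal. f_equal. apply proof_irrelevance. }
  { intros u0 u1 u2 g s s'. rewrite <- !key. unfold hat, arr, actR. simpl.
    rewrite ginv_comp. rewrite <- !gassoc.
    do 4 f_equal. apply proof_irrelevance. }
Qed.
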